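(* Let $G$ be a finite group and $X$ a finite $G$-poset. Then the orbit complex $\mathcal{K}(X)/G$ is equal to the simplicial complex $\mathcal{K}(X/G)$.
   Context: A finite $G$-poset is a finite poset with a (right) action of $G$ by order-preserving maps. $\mathcal{K}(Y)$ denotes the simplicial complex of non-empty chains of a poset $Y$. The orbit poset $X/G$ is the set of orbits $\overline{x}$ with $\overline{x}\le\overline{y}$ iff there exist $x_1\in\overline{x}$, $y_1\in\overline{y}$ with $x_1\le y_1$. For a $G$-complex $K$, the orbit complex $K/G$ has as vertices the orbits of vertices of $K$, and a set $\{\overline{v_0},\dots,\overline{v_n}\}$ of such orbits is a simplex iff there are representatives $w_i\in\overline{v_i}$ such that $\{w_0,\dots,w_n\}$ is a simplex of $K$. *)

(* Defs.v *)
From mathcomp Require Import all_boot all_order all_fingroup.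
Set Implicit Arguments. Unset Strict Implicit. Unset Printing Implicit Defensive.
Import Order.Theory.
Local Open Scope order_scope.

Definition chain_complex (T : finType) (r : rel T) (V : {set T}) : {set {set T}} :=
  [set s : {set T} | [&& s != set0, s \subset V &
     [forall x in s, forall y in s, r x y || r y x]]].

Definition order_complex (d : Order.disp_t) (X : finPOrderType d) : {set {set X}} :=
  chain_complex (fun x y : X => x <= y) [set: X].

Definition orbits_of (gT : finGroupType) (X : finType) (to : {action gT &-> X})
  : {set {set X}} := [set orbit to [set: gT] x | x : X].

Definition orbit_le (d : Order.disp_t) (X : finPOrderType d) (O P : {set X}) : bool :=
  [exists x in O, exists y in P, x <= y].

Definition orbit_poset_complex (d : Order.disp_t) (X : finPOrderType d)
  (gT : finGroupType) (to : {action gT &-> X}) : {set {set {set X}}} :=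
  chain_complex (@orbit_le d X) (orbits_of to).

(* Orbit complex K/G of a G-complex K (simplices given as sets of vertices):
   vertices are orbits of vertices of K; a set S of such orbits is a simplex iff
   one can choose representatives f O \in O (O \in S) whose set is a simplex of K. *)
Definition orbit_complex (gT : finGroupType) (T : finType) (to : {action gT &-> T})
  (K : {set {set T}}) : {set {set {set T}}} :=
  [set S : {set {set T}} |
     (S \subset [set orbit to [set: gT] v | v in \bigcup_(s in K) s]) &&
     [exists f : {ffun {set T} -> T},
        [forall O in S, f O \in O] && (f @: S \in K)]].

(* Main.v *)
Require Import Defs.
From mathcomp Require Import all_boot all_order all_fingroup.
Import Order.Theory.
Set Implicit Arguments. Unset Strict Implicit. Unset Printing Implicit Defensive.

Lemma lift_le (gT : finGroupType) (d : Order.disp_t) (X : finPOrderType d)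
  (to : {action gT &-> X})
  (to_mono : forall (x y : X) (g : gT), (x <= y)%O -> (to x g <= to y g)%O)
  (x a b : X) : a \in orbit to [set: gT] x -> (a <= b)%O ->
  exists2 y, y \in orbit to [set: gT] b & (x <= y)%O.
Proof.
case/orbitP=> g _ <- le.
exists (to b (g^-1)%g); first exact: mem_orbit (in_setT _).
by rewrite -{1}(actK to g x); apply: to_mono.
Qed.

Lemma orbit_le_trans (gT : finGroupType) (d : Order.disp_t) (X : finPOrderType d)
  (to : {action gT &-> X})
  (to_mono : forall (x y : X) (g : gT), (x <= y)%O -> (to x g <= to y g)%O)
  (O P Q : {set X}) : P \in orbits_of to -> Q \in orbits_of to ->
  orbit_le O P -> orbit_le P Q -> orbit_le O Q.
Proof.
move=> /imsetP[p _ ->] /imsetP[q _ ->].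
case/existsP=> x /andP[xO /existsP[y /andP[yP lexy]]].
case/existsP=> y' /andP[y'P /existsP[z /andP[zQ ley'z]]].
have yy' : y' \in orbit to [set: gT] y.
  by rewrite orbit_sym in yP; exact: orbit_trans y'P yP.
have [w wz lew] := lift_le to_mono yy' ley'z.
apply/existsP; exists x; rewrite xO; apply/existsP; exists w.
rewrite (le_trans lexy lew) andbT.
exact: orbit_trans wz zQ.
Qed.

Lemma orbit_le_refl (gT : finGroupType) (d : Order.disp_t) (X : finPOrderType d)
  (to : {action gT &-> X}) (P : {set X}) : P \in orbits_of to -> orbit_le P P.
Proof.
move=> /imsetP[p _ ->]; apply/existsP; exists p; rewrite orbit_refl.
by apply/existsP; exists p; rewrite orbit_refl lexx.
Qed.

Lemma max_orbit (gT : finGroupType) (d : Order.disp_t) (X : finPOrderType d)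
  (to : {action gT &-> X})
  (to_mono : forall (x y : X) (g : gT), (x <= y)%O -> (to x g <= to y g)%O)
  (S : {set {set X}}) (O0 : {set X}) : O0 \in S -> S \subset orbits_of to ->
  (forall O P, O \in S -> P \in S -> orbit_le O P || orbit_le P O) ->
  exists2 M, M \in S & forall P, P \in S -> orbit_le P M.
Proof.
move=> O0S sS tot.
pose F O := #|[set P in S | orbit_le P O]|.
case: (arg_maxnP F O0S) => M MS Mmax.
exists M => // P PS.
have := tot P M PS MS; case/orP => // leMP.
have : F P <= F M by apply: Mmax.
rewrite /F; apply: contraTT => nPM.
rewrite -ltnNge; apply: proper_card; rewrite properE; apply/andP; split.
  apply/subsetP => Q; rewrite !inE => /andP[QS leQM]; rewrite QS /=.
  exact: orbit_le_trans (subsetP sS _ MS) (subsetP sS _ PS) leQM leMP.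
apply/subsetPn; exists P.
  by rewrite inE PS (orbit_le_refl (subsetP sS _ PS)).
by rewrite inE (negbTE nPM) andbF.
Qed.

Lemma chain_lift (gT : finGroupType) (d : Order.disp_t) (X : finPOrderType d)
  (to : {action gT &-> X})
  (to_mono : forall (x y : X) (g : gT), (x <= y)%O -> (to x g <= to y g)%O)
  (n : nat) (S : {set {set X}}) : #|S| = n -> S != set0 -> S \subset orbits_of to ->
  (forall O P, O \in S -> P \in S -> orbit_le O P || orbit_le P O) ->
  exists f : {set X} -> X, exists2 T, T \in S &
   [/\ forall O, O \in S -> f O \in O,
       forall O P, O \in S -> P \in S -> (f O <= f P)%O || (f P <= f O)%O &
       forall O, O \in S -> (f O <= f T)%O].
Proof.
elim: n S => [|n IH] S cS nS sS tot.
  by move/cards0_eq: cS nS => ->; rewrite eqxx.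
have /set0Pn [O0 O0S] := nS.
have [M MS Mmax] := max_orbit to_mono O0S sS tot.
have [m _ Mm] := imsetP (subsetP sS _ MS).
set S' := S :\ M.
have cS' : #|S'| = n by move: cS; rewrite (cardsD1 M) MS add1n => -[].
case: (eqVneq S' set0) => [S'0 | nS'].
  have SM : forall O, O \in S -> O = M.
    move=> O OS; apply/eqP; apply: contraT => nOM.
    have: O \in S' by rewrite !inE nOM OS.
    by rewrite S'0 inE.
  exists (fun _ => m), M => //; split=> [O OS|O P _ _|O _]; rewrite ?lexx //.
  by rewrite (SM O OS) Mm orbit_refl.
have sS' : S' \subset S by apply: subsetDl.
have [f' [T TS' [f'in f'cmp f'top]]] :=
  IH S' cS' nS' (subset_trans sS' sS)
     (fun O P OS PS => tot O P (subsetP sS' _ OS) (subsetP sS' _ PS)).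
have TS := subsetP sS' _ TS'.
have [t _ Tt] := imsetP (subsetP sS _ TS).
case/existsP: (Mmax T TS) => x /andP[xT /existsP[b /andP[bM lexb]]].
have xf : x \in orbit to [set: gT] (f' T).
  have fT : f' T \in orbit to [set: gT] t by rewrite -Tt; apply: f'in.
  rewrite Tt in xT.
  by rewrite orbit_sym in fT; apply: orbit_trans xT fT.
have [y yb leTy] := lift_le to_mono xf lexb.
have yM : y \in M.
  by rewrite Mm; apply: (orbit_trans yb); rewrite -Mm.
have inS' : forall O, O \in S -> O != M -> O \in S' by move=> O OS nOM; rewrite !inE nOM.
have topy : forall O, O \in S -> O != M -> (f' O <= y)%O.
  by move=> O OS nOM; apply: le_trans (f'top O (inS' O OS nOM)) leTy.
exists (fun O => if O == M then y else f' O), M => //; split.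
- by move=> O OS; case: eqP => [->|/eqP nOM] //; apply: f'in; apply: inS'.
- move=> O P OS PS; case: (eqVneq O M) => [_|nOM]; case: (eqVneq P M) => [_|nPM].
  + by rewrite lexx.
  + by rewrite topy ?orbT.
  + by rewrite topy.
  + by apply: f'cmp; apply: inS'.
- by move=> O OS; rewrite eqxx; case: (eqVneq O M) => [_|nOM]; rewrite ?lexx ?topy.
Qed.


Theorem proposition2p7 (gT : finGroupType) (d : Order.disp_t) (X : finPOrderType d)
  (to : {action gT &-> X})
  (to_mono : forall (x y : X) (g : gT), (x <= y)%O -> (to x g <= to y g)%O) :
  orbit_complex to (order_complex X) = orbit_poset_complex to.
Proof.
have U : \bigcup_(s in order_complex X) s = [set: X].
  apply/setP => v; rewrite inE; apply/bigcupP; exists [set v]; last by rewrite inE.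
  rewrite /order_complex /chain_complex inE; apply/and3P; split.
  - by apply/set0Pn; exists v; rewrite inE.
  - exact: subsetT.
  - by apply/forallP => x; apply/implyP; rewrite inE => /eqP->;
      apply/forallP => y; apply/implyP; rewrite inE => /eqP->; rewrite lexx.
apply/setP => S.
rewrite /orbit_complex /orbit_poset_complex /chain_complex !inE U.
apply/idP/idP.
- case/andP => sub /existsP[f /andP[/forallP fin fK]].
  rewrite /order_complex /chain_complex inE in fK.
  case/and3P: fK => ne _ /forallP cmp.
  apply/and3P; split => //.
  + by apply: contraNneq ne => ->; rewrite imset0.
  + apply: subset_trans sub _; apply/subsetP => O /imsetP[v _ ->]; exact: imset_f.
  + apply/forallP => O; apply/implyP => OS; apply/forallP => P; apply/implyP => PS.
    have fO := implyP (fin O) OS; have fP := implyP (fin P) PS.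
    have := implyP (forallP (implyP (cmp (f O)) (imset_f _ OS)) (f P)) (imset_f _ PS).
    case/orP => le; apply/orP; [left|right]; apply/existsP.
    * by exists (f O); rewrite fO; apply/existsP; exists (f P); rewrite fP le.
    * by exists (f P); rewrite fP; apply/existsP; exists (f O); rewrite fO le.
- case/and3P => nS sS /forallP tot.
  have tot' : forall O P, O \in S -> P \in S -> orbit_le O P || orbit_le P O.
    by move=> O P OS PS; exact: implyP (forallP (implyP (tot O) OS) P) PS.
  have [f [T _ [fin fcmp _]]] := chain_lift to_mono (erefl #|S|) nS sS tot'.
  apply/andP; split.
    by apply: subset_trans sS _; apply/subsetP => O /imsetP[v _ ->]; exact: imset_f.
  apply/existsP; exists (finfun f); apply/andP; split.
    by apply/forallP => O; apply/implyP => OS; rewrite ffunE fin.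
  rewrite /order_complex /chain_complex inE; apply/and3P; split.
  + by rewrite imset_eq0.
  + exact: subsetT.
  + apply/forallP => x; apply/implyP => /imsetP[O OS ->].
    apply/forallP => y; apply/implyP => /imsetP[P PS ->].
    by rewrite !ffunE fcmp.
Qed.
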